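(* Let $k$ be a field, $\Gamma=(V,E)$ a finite connected quiver, $I\subseteq R^2$ a two-sided ideal of $k\Gamma$, and $\mathscr{Q}$ a fixed basis of $k\Gamma/I$ as described in the context. For a $k$-linear map $D$ into $k\Gamma/I$ defined (at least) on $kV\oplus kE$, and a path $p$ in its domain, write $D(p)=\sum_{\overline{q}\in\mathscr{Q}}c^p_{\overline{q}}\overline{q}$ with $c^p_{\overline{q}}\in k$. Consider the conditions: (a) for every $v\in V$, $D(v)=\sum_{\overline{q}\in\mathscr{Q},\,t(\overline{q})=v,\,h(\overline{q})\neq v}c^v_{\overline{q}}\overline{q}+\sum_{\overline{q}\in\mathscr{Q},\,h(\overline{q})=v,\,t(\overline{q})\neq v}c^v_{\overline{q}}\overline{q}$; (b) for every $p\in E$, $D(p)=\sum_{\overline{q}\in\mathscr{Q},\,h(\overline{q})=t(p),\,t(\overline{q})\neq t(p)}c^{t(p)}_{\overline{q}}\,\overline{q}\,\overline{p}+\sum_{\overline{q}\in\mathscr{Q},\,\overline{q}\parallel p}c^p_{\overline{q}}\overline{q}+\sum_{\overline{q}\in\mathscr{Q},\,t(\overline{q})=h(p),\,h(\overline{q})\neq h(p)}c^{h(p)}_{\overline{q}}\,\overline{p}\,\overline{q}$; (c) for every $\overline{q}\in\mathscr{Q}$ with $t(\overline{q})\neq h(\overline{q})$, $c^{h(\overline{q})}_{\overline{q}}+c^{t(\overline{q})}_{\overline{q}}=0$. (i) If $D:k\Gamma\to k\Gamma/I$ is a differential operator, then (a), (b), (c) hold. (ii) Conversely, if a $k$-linear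 map $D:kV\oplus kE\to k\Gamma/I$ satisfies (a), (b), (c), then $D$ extends uniquely to a differential operator $k\Gamma\to k\Gamma/I$, given on a path $p=p_1\cdots p_l$ ($p_i\in E$, $l\ge 2$) by $D(p)=\sum_{i=1}^l\overline{p_1}\cdots\overline{p_{i-1}}D(p_i)\overline{p_{i+1}}\cdots\overline{p_l}$.
   Context: For a path $p$, $t(p)$ and $h(p)$ denote its starting and ending vertex; vertices are trivial paths with $t(v)=h(v)=v$; paths are multiplied by left-to-right concatenation ($pq=0$ if $h(p)\neq t(q)$), so $t(p)p=p=ph(p)$. $R$ is the ideal of $k\Gamma$ generated by $E$; $\overline{x}=x+I$; $kV$, $kE$ are the spans of $V$, $E$. A differential operator from $k\Gamma$ to $k\Gamma/I$ is a $k$-linear map with $D(xy)=D(x)\overline{y}+\overline{x}D(y)$. $\mathscr{Q}$ is a fixed $k$-basis of $k\Gamma/I$ consisting of residue classes of paths and containing $\overline{v}$ for all $v\in V$ and $\overline{e}$ for all $e\in E$ (such a basis exists). If two paths not in $I$ have the same residue class they are parallel (same start and end vertex), so for $\overline{q}\in\mathscr{Q}$ one defines $t(\overline{q})$, $h(\overline{q})$ as the start and end vertex of any representing path; for a path $s$, $s\parallel\overline{q}$ means $t(s)=t(\overline{q})$ and $h(s)=h(\overline{q})$. *)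

(* Defs.v *)
From HB Require Import structures.
From mathcomp Require Import all_boot all_order all_algebra.
From mathcomp Require Import finmap.
From mathcomp.multinomials Require Import monalg.

Set Implicit Arguments.
Unset Strict Implicit.
Unset Printing Implicit Defensive.

Import GRing.Theory.
Local Open Scope ring_scope.

Section PathAlgebra.

Variables (V E : finType) (t h : E -> V).

Definition quiver_connected : Prop :=
  forall u v : V,
    connect (fun a b => [exists e, ((t e == a) && (h e == b))
                                    || ((t e == b) && (h e == a))]) u v.

(* A raw path is a starting vertex together with a list of arrows; it is a
   path when the arrows are composable (left-to-right) and the first arrow
   starts at the given vertex.  The empty list gives the trivial path at v. *)
Definition validp (p : V * seq E) : bool :=
  if p.2 is e :: s then (t e == p.1) && path (fun e1 e2 => h e1 == t e2) e s
  else true.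

Definition qpath := {p : V * seq E | validp p}.

Definition arrows (p : qpath) : seq E := (val p).2.
Definition ptl (p : qpath) : V := (val p).1.
Definition phd (p : qpath) : V := last (val p).1 [seq h e | e <- arrows p].

Definition triv (v : V) : qpath := exist _ (v, [::]) (erefl true).

Lemma arrow_validp (e : E) : validp (t e, [:: e]).
Proof. by rewrite /validp /= eqxx. Qed.

Definition apath (e : E) : qpath := exist _ (t e, [:: e]) (arrow_validp e).

Section Algebra.
Variable k : fieldType.

Definition kG := {malg k[qpath]}.

Definition pcat (p q : qpath) : kG :=
  if phd p == ptl q then
    (if insub (ptl p, arrows p ++ arrows q) is Some r then << r >> else 0)
  else 0.

Definition pmul (x y : kG) : kG :=
  \sum_(p <- msupp x) \sum_(q <- msupp y) (x@_p * y@_q) *: pcat p q.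

Definition vtx (v : V) : kG := << triv v >>.
Definition arr (e : E) : kG := << apath e >>.

Definition in_kVE (x : kG) : Prop :=
  forall p, p \in msupp x -> (size (arrows p) <= 1)%N.

(* R^2 : elements supported on paths of length >= 2
   (R = ideal generated by the arrows = span of paths of length >= 1). *)
Definition in_R2 (x : kG) : Prop :=
  forall p, p \in msupp x -> (2 <= size (arrows p))%N.

Definition two_sided_ideal (I : kG -> Prop) : Prop :=
  [/\ I 0,
      (forall x y, I x -> I y -> I (x + y)),
      (forall (a : k) x, I x -> I (a *: x)),
      (forall x y, I x -> I (pmul y x)) &
      (forall x y, I x -> I (pmul x y))].

(* (A, pi, mulA) is the quotient algebra k Gamma / I : pi is a k-linear
   surjection with kernel exactly I, and mulA is the induced multiplication,
   i.e. (x + I)(y + I) = xy + I. *)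
Definition is_quotient (I : kG -> Prop) (A : lmodType k) (pi : kG -> A)
    (mulA : A -> A -> A) : Prop :=
  [/\ (forall (a : k) x y, pi (a *: x + y) = a *: pi x + pi y),
      (forall z : A, exists x, pi x = z),
      (forall x, pi x = 0 <-> I x) &
      (forall x y, pi (pmul x y) = mulA (pi x) (pi y))].

Section Quotient.
Variables (A : lmodType k) (pi : kG -> A) (mulA : A -> A -> A).

Definition res (p : qpath) : A := pi << p >>.

(* [Qsum Q z f] : z equals the (finitely supported) sum of f over Q. *)
Definition Qsum (Q : qpath -> Prop) (z : A) (f : qpath -> A) : Prop :=
  exists s : seq qpath,
    [/\ uniq s, (forall q, q \in s -> Q q),
        (forall q, Q q -> q \notin s -> f q = 0) &
        z = \sum_(q <- s) f q].

(* The residues of the paths in Q (a set of representative paths) form a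
   basis of A, and crd z q is the coefficient of (res q) in z. *)
Definition is_path_basis (Q : qpath -> Prop) (crd : A -> qpath -> k) : Prop :=
  (forall (s : seq qpath) (c : qpath -> k),
      uniq s -> (forall q, q \in s -> Q q) ->
      \sum_(q <- s) c q *: res q = 0 -> forall q, q \in s -> c q = 0)
  /\ (forall z : A, Qsum Q z (fun q => crd z q *: res q)).

Definition is_linear (D : kG -> A) : Prop :=
  forall (a : k) x y, D (a *: x + y) = a *: D x + D y.

Definition linear_on_kVE (D : kG -> A) : Prop :=
  forall (a : k) x y, in_kVE x -> in_kVE y -> D (a *: x + y) = a *: D x + D y.

Definition diff_op (D : kG -> A) : Prop :=
  is_linear D /\
  forall x y, D (pmul x y) = mulA (D x) (pi y) + mulA (pi x) (D y).

Variables (Q : qpath -> Prop) (crd : A -> qpath -> k).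

Definition cf (D : kG -> A) (x : kG) (q : qpath) : k := crd (D x) q.

Definition cond_a (D : kG -> A) : Prop :=
  forall v : V,
    Qsum Q (D (vtx v)) (fun q =>
      (if (ptl q == v) && (phd q != v) then cf D (vtx v) q *: res q else 0)
      + (if (phd q == v) && (ptl q != v) then cf D (vtx v) q *: res q else 0)).

Definition cond_b (D : kG -> A) : Prop :=
  forall p : E,
    Qsum Q (D (arr p)) (fun q =>
      (if (phd q == t p) && (ptl q != t p) then
         cf D (vtx (t p)) q *: mulA (res q) (res (apath p)) else 0)
      + (if (ptl q == t p) && (phd q == h p) then cf D (arr p) q *: res q
         else 0)
      + (if (ptl q == h p) && (phd q != h p) then
         cf D (vtx (h p)) q *: mulA (res (apath p)) (res q) else 0)).

Definition cond_c (D : kG -> A) : Prop :=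
  forall q, Q q -> ptl q != phd q ->
    cf D (vtx (phd q)) q + cf D (vtx (ptl q)) q = 0.

Definition lmulA (s : seq E) (z : A) : A :=
  foldr (fun e acc => mulA (res (apath e)) acc) z s.
Definition rmulA (z : A) (s : seq E) : A :=
  foldl (fun acc e => mulA acc (res (apath e))) z s.

Definition leibniz_formula (D : kG -> A) (p : qpath) : A :=
  let s := arrows p in
  \sum_(i < size s)
     lmulA (take i s) (rmulA (D (arr (tnth (in_tuple s) i))) (drop i.+1 s)).

End Quotient.
End Algebra.
End PathAlgebra.

(* Main.v *)
Require Import Defs.
From HB Require Import structures.
From mathcomp Require Import all_boot all_order all_algebra.
From mathcomp Require Import finmap.
From mathcomp.multinomials Require Import monalg.
Module P1.

Set Implicit Arguments.
Unset Strict Implicit.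
Unset Printing Implicit Defensive.
Import GRing.Theory.
Local Open Scope ring_scope.

Section LinSec.
Variables (K : choiceType) (k : fieldType).

Definition Lin (M : lmodType k) (F : K -> M) (x : {malg k[K]}) : M :=
  \sum_(p <- msupp x) x@_p *: F p.

Lemma Lin_w (M : lmodType k) (F : K -> M) x (d : {fset K}) :
  (msupp x `<=` d)%fset -> Lin F x = \sum_(p <- d) x@_p *: F p.
Proof.
move=> le; rewrite /Lin; apply: big_fset_incl => // p _ /mcoeff_outdom ->.
by rewrite scale0r.
Qed.

Lemma Lin_lin (M : lmodType k) (F : K -> M) a x y :
  Lin F (a *: x + y) = a *: Lin F x + Lin F y.
Proof.
pose d := (msupp x `|` msupp y `|` msupp (a *: x + y))%fset.
rewrite (@Lin_w _ _ _ d) ?fsubsetUr //.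
rewrite (@Lin_w _ _ x d); last by rewrite /d -fsetUA fsubsetUl.
rewrite (@Lin_w _ _ y d); last by rewrite /d fsetUC fsetUA fsubsetUr.
rewrite scaler_sumr -big_split /=; apply: eq_bigr => p _.
by rewrite mcoeffD mcoeffZ scalerDl scalerA.
Qed.

Lemma Lin0 (M : lmodType k) (F : K -> M) : Lin F 0 = 0.
Proof. by rewrite /Lin big1 // => p _; rewrite mcoeff0 scale0r. Qed.

Lemma msuppU1' (p : K) : msupp (<< p >> : {malg k[K]}) = [fset p]%fset.
Proof.
apply/fsetP=> q; rewrite -mcoeff_neq0 mcoeffU !inE.
case: (boolP (p == q)) => [/eqP e|ne].
  by subst q; rewrite eqxx /= oner_neq0.
by rewrite /= eqxx eq_sym (negbTE ne).
Qed.

Lemma Lin_U (M : lmodType k) (F : K -> M) p : Lin F << p >> = F p.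
Proof. by rewrite /Lin msuppU1' big_seq_fset1 mcoeffUU scale1r. Qed.

Lemma LinF_lin (M : lmodType k) (F G : K -> M) a x :
  Lin (fun p => a *: F p + G p) x = a *: Lin F x + Lin G x.
Proof.
by rewrite /Lin scaler_sumr -big_split; apply: eq_bigr => p _;
  rewrite scalerDr !scalerA mulrC.
Qed.

Lemma LinF_add (M : lmodType k) (F G : K -> M) x :
  Lin (fun p => F p + G p) x = Lin F x + Lin G x.
Proof. by rewrite /Lin -big_split; apply: eq_bigr => p _; rewrite scalerDr. Qed.

Lemma eq_Lin (M : lmodType k) (F G : K -> M) x :
  (forall p, F p = G p) -> Lin F x = Lin G x.
Proof. by move=> e; apply: eq_bigr => p _; rewrite e. Qed.

Definition islin (M N : lmodType k) (L : M -> N) :=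
  forall a x y, L (a *: x + y) = a *: L x + L y.

Lemma islin0 (M N : lmodType k) (L : M -> N) : islin L -> L 0 = 0.
Proof.
move=> H; have := H 1 0 0; rewrite !scale1r addr0 => e.
by apply: (addrI (L 0)); rewrite addr0 -e.
Qed.

Lemma islinD (M N : lmodType k) (L : M -> N) : islin L ->
  forall x y, L (x + y) = L x + L y.
Proof. by move=> H x y; have := H 1 x y; rewrite !scale1r. Qed.

Lemma islinZ (M N : lmodType k) (L : M -> N) : islin L ->
  forall a x, L (a *: x) = a *: L x.
Proof. by move=> H a x; rewrite -[a *: x]addr0 H islin0 // addr0. Qed.

Lemma islin_sum (M N : lmodType k) (L : M -> N) (I : Type) (r : seq I) (G : I -> M) :
  islin L -> L (\sum_(i <- r) G i) = \sum_(i <- r) L (G i).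
Proof.
move=> H; elim: r => [|a r IH]; first by rewrite !big_nil islin0.
by rewrite !big_cons islinD // IH.
Qed.

Lemma Lin_comp (M N : lmodType k) (L : M -> N) (F : K -> M) x :
  islin L -> L (Lin F x) = Lin (fun p => L (F p)) x.
Proof.
move=> H; rewrite /Lin islin_sum //; apply: eq_bigr => p _; exact: islinZ.
Qed.

Lemma monU_scale (p : K) (c : k) : << c *g p >> = c *: (<< p >> : {malg k[K]}).
Proof. by apply/malgP => q; rewrite mcoeffZ !mcoeffU mulr_natr. Qed.

Lemma lin_Lin (M : lmodType k) (L : {malg k[K]} -> M) :
  islin L -> forall x, L x = Lin (fun p => L << p >>) x.
Proof.
move=> H x; rewrite {1}(monalgE x) islin_sum //; apply: eq_bigr => p _.
by rewrite monU_scale islinZ.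
Qed.

Lemma Lin_islin (M : lmodType k) (F : K -> M) : islin (Lin F).
Proof. by move=> a x y; apply: Lin_lin. Qed.

End LinSec.

Lemma islin_comp (k : fieldType) (M N P : lmodType k) (f : M -> N) (g : N -> P) :
  islin f -> islin g -> islin (fun x => g (f x)).
Proof. by move=> Hf Hg a x y; rewrite Hf Hg. Qed.



End P1.
Import P1.

Module P2.

Set Implicit Arguments.
Unset Strict Implicit.
Unset Printing Implicit Defensive.
Import GRing.Theory.
Local Open Scope ring_scope.

Section Paths.
Variables (V E : finType) (t h : E -> V).
Local Notation qp := (qpath t h).

Definition pc (p q : qp) : qp := odflt p (insub (ptl p, arrows p ++ arrows q)).

Lemma qpath_eq (p q : qp) : ptl p = ptl q -> arrows p = arrows q -> p = q.
Proof.
case: p => [[v s] Hp]; case: q => [[w r] Hq]; rewrite /ptl /arrows /= => e1 e2.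
by apply: val_inj => /=; rewrite e1 e2.
Qed.

Lemma validP (p : qp) : validp t h (ptl p, arrows p).
Proof. by case: p => [[v s] Hp]. Qed.

Lemma phdE (p : qp) : phd p = last (ptl p) [seq h e | e <- arrows p].
Proof. by []. Qed.

Lemma validp_cat (p q : qp) : phd p = ptl q ->
  validp t h (ptl p, arrows p ++ arrows q).
Proof.
move=> e; have vp := validP p; have vq := validP q.
move: e vp; rewrite phdE; case: (arrows p) => [|a s] /=.
  by move=> ->.
move=> e /andP[ta pa]; rewrite /= in ta; rewrite /validp /= ta /= cat_path pa /=.
move: vq; case: (arrows q) => [|b r] //= /andP[tb pb].
rewrite pb andbT; move: e; rewrite last_map => e.
by rewrite e (eqP tb).
Qed.

Lemma pc_val (p q : qp) : phd p = ptl q ->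
  val (pc p q) = (ptl p, arrows p ++ arrows q).
Proof. by move=> e; rewrite /pc (insubT _ (validp_cat e)). Qed.

Lemma pc_ptl (p q : qp) : phd p = ptl q -> ptl (pc p q) = ptl p.
Proof. by move=> e; rewrite /ptl pc_val. Qed.

Lemma pc_arrows (p q : qp) : phd p = ptl q -> arrows (pc p q) = arrows p ++ arrows q.
Proof. by move=> e; rewrite /arrows pc_val. Qed.

Lemma pc_phd (p q : qp) : phd p = ptl q -> phd (pc p q) = phd q.
Proof.
move=> e; rewrite !phdE pc_ptl // pc_arrows // map_cat last_cat -phdE e.
by [].
Qed.

Lemma pc_assoc (p q r : qp) : phd p = ptl q -> phd q = ptl r ->
  pc (pc p q) r = pc p (pc q r).
Proof.
move=> e1 e2; have e3 : phd (pc p q) = ptl r by rewrite pc_phd.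
have e4 : phd p = ptl (pc q r) by rewrite pc_ptl.
apply: qpath_eq; first by rewrite !pc_ptl.
by rewrite !pc_arrows // catA.
Qed.

Lemma ptl_triv v : ptl (triv t h v) = v. Proof. by []. Qed.
Lemma phd_triv v : phd (triv t h v) = v. Proof. by []. Qed.
Lemma arrows_triv v : arrows (triv t h v) = [::]. Proof. by []. Qed.
Lemma ptl_apath e : ptl (apath t h e) = t e. Proof. by []. Qed.
Lemma phd_apath e : phd (apath t h e) = h e. Proof. by []. Qed.
Lemma arrows_apath e : arrows (apath t h e) = [:: e]. Proof. by []. Qed.

Lemma pc_triv_l v (q : qp) : ptl q = v -> pc (triv t h v) q = q.
Proof.
move=> e; have e' : phd (triv t h v) = ptl q by rewrite phd_triv.
by apply: qpath_eq; rewrite ?pc_ptl ?pc_arrows.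
Qed.

Lemma pc_triv_r v (q : qp) : phd q = v -> pc q (triv t h v) = q.
Proof.
move=> e; have e' : phd q = ptl (triv t h v) by rewrite ptl_triv.
by apply: qpath_eq; rewrite ?pc_ptl ?pc_arrows ?arrows_triv ?cats0.
Qed.

Lemma path_nil (p : qp) : arrows p = [::] -> p = triv t h (ptl p).
Proof. by move=> e; apply: qpath_eq. Qed.

Lemma path_cons (p : qp) e s : arrows p = e :: s ->
  exists p' : qp, [/\ ptl p' = h e, arrows p' = s & p = pc (apath t h e) p'].
Proof.
move=> ep; have vp := validP p; rewrite ep /= in vp.
case/andP: vp => te pa; rewrite /= in te.
have vs : validp t h (h e, s).
  by move: pa; case: s {ep} => [|b r] //= /andP[/eqP H1 H2]; rewrite /validp /= H1 eqxx.
exists (exist _ (h e, s) vs); split => //.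
have e1 : phd (apath t h e) = ptl (exist (validp t h) (h e, s) vs) by [].
apply: qpath_eq; rewrite ?pc_ptl ?pc_arrows //.
  by rewrite ptl_apath (eqP te).
Qed.

Lemma path_one (p : qp) f : arrows p = [:: f] -> p = apath t h f.
Proof.
move=> e; have [p' [e1 e2 ->]] := path_cons e.
by rewrite (path_nil e2) e1 pc_triv_r.
Qed.

Section K.
Variable k : fieldType.

Lemma pcatE (p q : qp) :
  pcat k p q = if phd p == ptl q then << pc p q >> else 0.
Proof.
rewrite /pcat; case: eqP => // e.
by rewrite /pc (insubT _ (validp_cat e)).
Qed.

Lemma pmulE (x y : kG t h k) :
  pmul x y = Lin (fun p => Lin (fun q => pcat k p q) y) x.
Proof.
rewrite /pmul /Lin; apply: eq_bigr => p _; rewrite scaler_sumr.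
by apply: eq_bigr => q _; rewrite scalerA.
Qed.

Lemma pmulUU (p q : qp) : pmul << p >> << q >> = pcat k p q.
Proof. by rewrite pmulE Lin_U Lin_U. Qed.

Lemma pmul_linl y : islin (fun x : kG t h k => pmul x y).
Proof. by move=> a x x'; rewrite !pmulE Lin_lin. Qed.

Lemma pmul_linr x : islin (fun y : kG t h k => pmul x y).
Proof.
move=> a y y'; rewrite !pmulE.
transitivity (Lin (fun p => a *: Lin (fun q => pcat k p q) y + Lin (fun q => pcat k p q) y') x).
  apply: eq_Lin => p; exact: Lin_lin.
exact: LinF_lin.
Qed.

End K.
End Paths.

End P2.
Import P2.

Module P3.

Set Implicit Arguments.
Unset Strict Implicit.
Unset Printing Implicit Defensive.
Import GRing.Theory.
Local Open Scope ring_scope.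

Section Quot.
Variables (V E : finType) (t h : E -> V) (k : fieldType).
Local Notation qp := (qpath t h).
Local Notation kG := (kG t h k).
Variables (I : kG -> Prop) (A : lmodType k) (pi : kG -> A) (mulA : A -> A -> A).
Hypothesis Hquot : is_quotient I pi mulA.
Local Notation r := (res pi).

Lemma pi_lin : islin pi.
Proof. by case: Hquot. Qed.

Lemma pi_surj z : exists x, pi x = z.
Proof. by case: Hquot. Qed.

Lemma pi_mul x y : pi (pmul x y) = mulA (pi x) (pi y).
Proof. by case: Hquot. Qed.

Lemma pi_Lin x : pi x = Lin r x.
Proof. by rewrite (lin_Lin pi_lin). Qed.

Lemma mulA_linl z : islin (fun w => mulA w z).
Proof.
move=> a w w'; have [x <-] := pi_surj w; have [x' <-] := pi_surj w'.
have [y <-] := pi_surj z.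
by rewrite -pi_lin -!pi_mul (pmul_linl y) pi_lin.
Qed.

Lemma mulA_linr z : islin (fun w => mulA z w).
Proof.
move=> a w w'; have [x <-] := pi_surj w; have [x' <-] := pi_surj w'.
have [y <-] := pi_surj z.
by rewrite -pi_lin -!pi_mul (pmul_linr y) pi_lin.
Qed.

Lemma mul0A z : mulA 0 z = 0. Proof. exact: (islin0 (mulA_linl z)). Qed.
Lemma mulA0 z : mulA z 0 = 0. Proof. exact: (islin0 (mulA_linr z)). Qed.
Lemma mulDA z x y : mulA (x + y) z = mulA x z + mulA y z.
Proof. exact: (islinD (mulA_linl z)). Qed.
Lemma mulAD z x y : mulA z (x + y) = mulA z x + mulA z y.
Proof. exact: (islinD (mulA_linr z)). Qed.
Lemma mulZA z a x : mulA (a *: x) z = a *: mulA x z.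
Proof. exact: (islinZ (mulA_linl z)). Qed.
Lemma mulAZ z a x : mulA z (a *: x) = a *: mulA z x.
Proof. exact: (islinZ (mulA_linr z)). Qed.

Lemma res_mul (p q : qp) :
  mulA (r p) (r q) = if phd p == ptl q then r (pc p q) else 0.
Proof.
rewrite /res -pi_mul pmulUU pcatE; case: ifP => // _.
exact: (islin0 pi_lin).
Qed.


Lemma mulA_assoc_gen (rr : qp -> A)
  (Hr : forall p, pi << p >> = rr p)
  (Hrm : forall p q, mulA (rr p) (rr q) = if phd p == ptl q then rr (pc p q) else 0) :
  forall a b c, mulA (mulA a b) c = mulA a (mulA b c).
Proof.
have R3 : forall p q s, mulA (mulA (rr p) (rr q)) (rr s) = mulA (rr p) (mulA (rr q) (rr s)).
  move=> p q s; rewrite (Hrm p q) (Hrm q s).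
  case: (eqVneq (phd p) (ptl q)) => e1; case: (eqVneq (phd q) (ptl s)) => e2.
  - rewrite (Hrm (pc p q) s) (Hrm p (pc q s)) pc_phd // pc_ptl // e1 e2 !eqxx.
    by rewrite pc_assoc.
  - by rewrite (Hrm (pc p q) s) pc_phd // (negbTE e2) mulA0.
  - by rewrite mul0A (Hrm p (pc q s)) pc_ptl // (negbTE e1).
  - by rewrite mul0A mulA0.
have PL : forall x, pi x = Lin rr x.
  by move=> x; rewrite pi_Lin; apply: eq_Lin => p; rewrite /res Hr.
move=> a b c.
have [x <-] := pi_surj a; have [y <-] := pi_surj b; have [z <-] := pi_surj c.
rewrite !(PL x).
rewrite (Lin_comp _ _ (islin_comp (mulA_linl (pi y)) (mulA_linl (pi z)))).
rewrite (Lin_comp _ _ (mulA_linl (mulA (pi y) (pi z)))).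
apply: eq_Lin => p.
rewrite !(PL y).
rewrite (Lin_comp _ _ (islin_comp (mulA_linr (rr p)) (mulA_linl (pi z)))).
rewrite (Lin_comp _ _ (islin_comp (mulA_linl (pi z)) (mulA_linr (rr p)))).
apply: eq_Lin => q.
rewrite !(PL z).
rewrite (Lin_comp _ _ (mulA_linr (mulA (rr p) (rr q)))).
rewrite (Lin_comp _ _ (islin_comp (mulA_linr (rr q)) (mulA_linr (rr p)))).
apply: eq_Lin => s; exact: R3.
Qed.

Lemma mulA_assoc a b c : mulA (mulA a b) c = mulA a (mulA b c).
Proof. exact: (@mulA_assoc_gen (res pi) (fun p => erefl) res_mul). Qed.

End Quot.

End P3.
Import P3.

Module CoreM.

Set Implicit Arguments.
Unset Strict Implicit.
Unset Printing Implicit Defensive.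
Import GRing.Theory.
Local Open Scope ring_scope.

Section Core.
Variables (V E : finType) (t h : E -> V) (k : fieldType).
Local Notation qp := (qpath t h).
Variables (A : lmodType k) (mulA : A -> A -> A) (r : qp -> A).
Local Notation "x ** y" := (mulA x y) (at level 40, left associativity).
Hypothesis HmL : forall z, islin (fun w => w ** z).
Hypothesis HmR : forall z, islin (fun w => z ** w).
Hypothesis Hrm : forall p q, r p ** r q = if phd p == ptl q then r (pc p q) else 0.
Hypothesis Hass : forall a b c, (a ** b) ** c = a ** (b ** c).
Variables (Q : qp -> Prop) (crd : A -> qp -> k).
Hypothesis Hind : forall (s : seq qp) (c : qp -> k),
  uniq s -> (forall q, q \in s -> Q q) ->
  \sum_(q <- s) c q *: r q = 0 -> forall q, q \in s -> c q = 0.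
Hypothesis Hexp : forall z : A, Qsum Q z (fun q => crd z q *: r q).

Local Notation e_ v := (r (triv t h v)).
Local Notation ar a := (r (apath t h a)).

Lemma mul0A z : 0 ** z = 0. Proof. exact: (islin0 (HmL z)). Qed.
Lemma mulA0 z : z ** 0 = 0. Proof. exact: (islin0 (HmR z)). Qed.
Lemma mulDA z x y : (x + y) ** z = x ** z + y ** z. Proof. exact: (islinD (HmL z)). Qed.
Lemma mulAD z x y : z ** (x + y) = z ** x + z ** y. Proof. exact: (islinD (HmR z)). Qed.
Lemma mulZA z a x : (a *: x) ** z = a *: (x ** z). Proof. exact: (islinZ (HmL z)). Qed.
Lemma mulAZ z a x : z ** (a *: x) = a *: (z ** x). Proof. exact: (islinZ (HmR z)). Qed.
Lemma mul_ifl (b : bool) x z : (if b then x else 0) ** z = if b then x ** z else 0.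
Proof. by case: b; rewrite ?mul0A. Qed.
Lemma mul_ifr (b : bool) x z : z ** (if b then x else 0) = if b then z ** x else 0.
Proof. by case: b; rewrite ?mulA0. Qed.
Lemma scale_if (b : bool) (c : k) (x : A) : c *: (if b then x else 0) = if b then c *: x else 0.
Proof. by case: b; rewrite ?scaler0. Qed.

Lemma rtv q v : r q ** e_ v = if phd q == v then r q else 0.
Proof. by rewrite Hrm ptl_triv; case: eqP => // E1; rewrite pc_triv_r. Qed.
Lemma vtr q v : e_ v ** r q = if ptl q == v then r q else 0.
Proof.
rewrite Hrm phd_triv eq_sym; case: eqP => // E1; by rewrite pc_triv_l.
Qed.
Lemma rqa0 q a : phd q != t a -> r q ** ar a = 0.
Proof. by rewrite Hrm ptl_apath => /negbTE ->. Qed.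
Lemma arq0 q a : ptl q != h a -> ar a ** r q = 0.
Proof. by rewrite Hrm phd_apath eq_sym => /negbTE ->. Qed.
Lemma are a : ar a ** e_ (h a) = ar a.
Proof. by rewrite rtv phd_apath eqxx. Qed.
Lemma ear a : e_ (t a) ** ar a = ar a.
Proof. by rewrite vtr ptl_apath eqxx. Qed.
Lemma vtvar q v a : e_ v ** (r q ** ar a) = if ptl q == v then r q ** ar a else 0.
Proof. by rewrite -Hass vtr mul_ifl. Qed.
Lemma vtarq q v a : e_ v ** (ar a ** r q) = if t a == v then ar a ** r q else 0.
Proof. by rewrite -Hass vtr ptl_apath mul_ifl. Qed.
Lemma rqaev q v a : (r q ** ar a) ** e_ v = if h a == v then r q ** ar a else 0.
Proof. by rewrite Hass rtv phd_apath mul_ifr. Qed.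
Lemma arqev q v a : (ar a ** r q) ** e_ v = if phd q == v then ar a ** r q else 0.
Proof. by rewrite Hass rtv mul_ifr. Qed.

Lemma ifZ (b : bool) (c : k) (x : A) : (if b then c else 0) *: x = if b then c *: x else 0.
Proof. by case: b; rewrite ?scale0r. Qed.

Lemma sum_sub (f : qp -> A) (s1 s : seq qp) : uniq s1 -> uniq s ->
  {subset s1 <= s} -> (forall q, q \in s -> q \notin s1 -> f q = 0) ->
  \sum_(q <- s1) f q = \sum_(q <- s) f q.
Proof.
move=> u1 u sub f0.
rewrite [RHS](bigID (fun q => q \in s1)) /= [X in _ + X]big1_seq ?addr0; last first.
  by move=> q /andP[n qs]; apply: f0.
rewrite -[RHS]big_filter; apply: perm_big; apply: uniq_perm => //.
  exact: filter_uniq.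
by move=> q; rewrite mem_filter; case: (boolP (q \in s1)) => // /sub ->.
Qed.

Lemma Qsum_ext (z : A) (f g : qp -> A) : (forall q, Q q -> f q = g q) ->
  Qsum Q z f -> Qsum Q z g.
Proof.
move=> fg [s [u sQ f0 ->]]; exists s; split => //.
- by move=> q Qq qs; rewrite -fg // f0.
- by rewrite big_seq [RHS]big_seq; apply: eq_bigr => q /sQ /fg.
Qed.

Lemma Qsum_add (z1 z2 : A) (f1 f2 : qp -> A) : Qsum Q z1 f1 -> Qsum Q z2 f2 ->
  Qsum Q (z1 + z2) (fun q => f1 q + f2 q).
Proof.
move=> [s1 [u1 sQ1 f01 ->]] [s2 [u2 sQ2 f02 ->]].
exists (undup (s1 ++ s2)); split.
- exact: undup_uniq.
- by move=> q; rewrite mem_undup mem_cat => /orP[/sQ1|/sQ2].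
- move=> q Qq; rewrite mem_undup mem_cat negb_or => /andP[n1 n2].
  by rewrite f01 // f02 // addr0.
- rewrite big_split /=; congr (_ + _); apply: sum_sub; rewrite ?undup_uniq //.
  + by move=> q; rewrite mem_undup mem_cat => ->.
  + by move=> q; rewrite mem_undup mem_cat => /orP[/sQ1 Qq|/sQ2 Qq] n; rewrite f01.
  + by move=> q; rewrite mem_undup mem_cat => ->; rewrite orbT.
  + by move=> q; rewrite mem_undup mem_cat => /orP[/sQ1 Qq|/sQ2 Qq] n; rewrite f02.
Qed.

Lemma Qsum_lin (g : A -> A) (z : A) (f : qp -> A) : islin g -> Qsum Q z f ->
  Qsum Q (g z) (fun q => g (f q)).
Proof.
move=> Hg [s [u sQ f0 ->]]; exists s; split => //.
- by move=> q Qq qs; rewrite f0 // islin0.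
- exact: islin_sum.
Qed.

Lemma Qsum0 : Qsum Q (0 : A) (fun _ => 0).
Proof. by exists [::]; split => //; rewrite big_nil. Qed.

Lemma Qsum_uniq (z z' : A) (f : qp -> A) : Qsum Q z f -> Qsum Q z' f -> z = z'.
Proof.
move=> [s1 [u1 sQ1 f01 ->]] [s2 [u2 sQ2 f02 ->]].
rewrite (@sum_sub f s1 (undup (s1 ++ s2))) ?undup_uniq //; last 2 first.
- by move=> q; rewrite mem_undup mem_cat => ->.
- by move=> q; rewrite mem_undup mem_cat => /orP[/sQ1|/sQ2] Qq n; rewrite f01.
rewrite (@sum_sub f s2 (undup (s1 ++ s2))) ?undup_uniq //.
- by move=> q; rewrite mem_undup mem_cat => ->; rewrite orbT.
- by move=> q; rewrite mem_undup mem_cat => /orP[/sQ1|/sQ2] Qq n; rewrite f02.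
Qed.

Lemma coef0 q (c : k) : Q q -> c *: r q = 0 -> c = 0.
Proof.
move=> Qq H; have := @Hind [:: q] (fun _ => c) (erefl _).
rewrite big_seq1 => /(_ _ H q); apply; last by rewrite inE.
by move=> q'; rewrite inE => /eqP ->.
Qed.

Lemma Qcoef (z : A) (c c' : qp -> k) : Qsum Q z (fun q => c q *: r q) -> Qsum Q z (fun q => c' q *: r q) ->
  forall q, Q q -> c q = c' q.
Proof.
move=> [s1 [u1 sQ1 f01 e1]] [s2 [u2 sQ2 f02 e2]] q Qq.
set s := undup (s1 ++ s2).
have sQ : forall q, q \in s -> Q q.
  by move=> q'; rewrite mem_undup mem_cat => /orP[/sQ1|/sQ2].
have E1 : z = \sum_(q <- s) c q *: r q.
  rewrite e1; apply: sum_sub; rewrite ?undup_uniq //.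
  - by move=> q'; rewrite mem_undup mem_cat => ->.
  - by move=> q' /sQ Qq' n; rewrite f01.
have E2 : z = \sum_(q <- s) c' q *: r q.
  rewrite e2; apply: sum_sub; rewrite ?undup_uniq //.
  - by move=> q'; rewrite mem_undup mem_cat => ->; rewrite orbT.
  - by move=> q' /sQ Qq' n; rewrite f02.
case: (boolP (q \in s)) => qs.
  apply/eqP; rewrite -subr_eq0; apply/eqP.
  apply: (@Hind s (fun q => c q - c' q)) => //; first exact: undup_uniq.
  rewrite (eq_bigr (fun q => c q *: r q - c' q *: r q)); last by move=> q' _; rewrite scalerBl.
  by rewrite sumrB -E1 -E2 subrr.
have n1 : q \notin s1 by apply: contra qs; rewrite mem_undup mem_cat => ->.
have n2 : q \notin s2 by apply: contra qs; rewrite mem_undup mem_cat => ->; rewrite orbT.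
by rewrite (coef0 Qq (f01 q Qq n1)) (coef0 Qq (f02 q Qq n2)).
Qed.


Section PW.
Variables (dv : V -> A) (da : E -> A).

Definition fa v q :=
  (if (ptl q == v) && (phd q != v) then crd (dv v) q *: r q else 0)
  + (if (phd q == v) && (ptl q != v) then crd (dv v) q *: r q else 0).

Definition fb p q :=
  (if (phd q == t p) && (ptl q != t p) then
     crd (dv (t p)) q *: (r q ** ar p) else 0)
  + (if (ptl q == t p) && (phd q == h p) then crd (da p) q *: r q else 0)
  + (if (ptl q == h p) && (phd q != h p) then
     crd (dv (h p)) q *: (ar p ** r q) else 0).

Ltac norm := rewrite /fa /fb ?(mulDA, mulAD, mul_ifl, mul_ifr, mulZA, mulAZ,
  vtvar, vtarq, rqaev, arqev, rtv, vtr, phd_apath, ptl_apath, scale_if).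

Ltac bc x y := let E := fresh "E" in
  case: (eqVneq x y) => E; [rewrite ?E | rewrite ?(negbTE E)].

Ltac bcz x y := let E := fresh "E" in
  case: (eqVneq x y) => E; [rewrite ?E | rewrite ?(negbTE E) ?(rqa0 E)].
Ltac bcz' x y := let E := fresh "E" in
  case: (eqVneq x y) => E; [rewrite ?E | rewrite ?(negbTE E) ?(arq0 E)].

Ltac fin := rewrite /= ?eqxx /= ?(if_same, addr0, add0r, scaler0, scale0r).

Lemma PW1 u q : fa u q ** e_ u + e_ u ** fa u q = fa u q.
Proof. by norm; bc (ptl q) u; bc (phd q) u; fin. Qed.

Lemma PW2 u v q : u != v ->
  fa u q ** e_ v + e_ u ** fa v q =
  (if (ptl q == u) && (phd q == v) then crd (dv u) q + crd (dv v) q else 0) *: r q.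
Proof.
move=> uv; have vu : v != u by rewrite eq_sym.
norm; rewrite ifZ.
bc (ptl q) u; bc (phd q) v; bc (ptl q) v; bc (phd q) u;
  rewrite ?(negbTE uv) ?(negbTE vu); fin; rewrite ?scalerDl //.
Qed.

Lemma PW3 f q : fa (t f) q ** ar f + e_ (t f) ** fb f q = fb f q.
Proof.
norm.
bcz (phd q) (t f); bcz' (ptl q) (h f); bc (ptl q) (t f); bc (phd q) (h f);
  bc (t f) (h f); fin; rewrite ?scalerDl //.
Qed.

Lemma PW4 u f q : t f != u ->
  fa u q ** ar f + e_ u ** fb f q =
  (if (ptl q == u) && (phd q == t f) then crd (dv u) q + crd (dv (t f)) q else 0)
    *: (r q ** ar f).
Proof.
move=> tfu; have tfu' : u != t f by rewrite eq_sym.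
norm; rewrite ifZ ?(negbTE tfu).
bcz (phd q) (t f); bc (ptl q) u; bc (phd q) u; bc (ptl q) (t f); bc (phd q) (h f);
  bcz' (ptl q) (h f); rewrite ?(negbTE tfu) ?(negbTE tfu'); fin; rewrite ?scalerDl //.
Qed.

Lemma PW5 a q : fb a q ** e_ (h a) + ar a ** fa (h a) q = fb a q.
Proof.
norm.
bcz (phd q) (t a); bcz' (ptl q) (h a); bc (ptl q) (t a); bc (phd q) (h a);
  bc (t a) (h a); fin; rewrite ?scalerDl //.
Qed.

Lemma PW6 (c : k) v q : (c *: r q) ** e_ v + e_ v ** (c *: r q) =
  ((if phd q == v then c else 0) + (if ptl q == v then c else 0)) *: r q.
Proof.
norm; rewrite scalerDl !ifZ.
bc (phd q) v; bc (ptl q) v; fin; rewrite ?scalerDl //.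
Qed.

Lemma PW7 a q : fa (t a) q ** ar a + (e_ (t a) ** (crd (da a) q *: r q)) ** e_ (h a)
  + ar a ** fa (h a) q = fb a q.
Proof.
norm.
bcz (phd q) (t a); bcz' (ptl q) (h a); bc (ptl q) (t a); bc (phd q) (h a);
  bc (t a) (h a); fin; rewrite ?scalerDl //.
Qed.


Lemma r_pc (p q : qp) : phd p = ptl q -> r (pc p q) = r p ** r q.
Proof. by move=> e; rewrite Hrm e eqxx. Qed.

Section II.
Hypothesis hA : forall v, Qsum Q (dv v) (fa v).
Hypothesis hB : forall p, Qsum Q (da p) (fb p).
Hypothesis hC : forall q, Q q -> ptl q != phd q ->
  crd (dv (phd q)) q + crd (dv (ptl q)) q = 0.

Lemma Videm u : dv u = dv u ** e_ u + e_ u ** dv u.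
Proof.
apply: (Qsum_uniq (hA u)).
apply: Qsum_ext (Qsum_add (Qsum_lin (HmL (e_ u)) (hA u)) (Qsum_lin (HmR (e_ u)) (hA u))).
by move=> q _ /=; rewrite PW1.
Qed.

Lemma Vorth u v : u != v -> dv u ** e_ v + e_ u ** dv v = 0.
Proof.
move=> uv; apply: (Qsum_uniq _ Qsum0).
apply: Qsum_ext (Qsum_add (Qsum_lin (HmL (e_ v)) (hA u)) (Qsum_lin (HmR (e_ u)) (hA v))).
move=> q Qq /=; rewrite PW2 //.
case: andP => [[/eqP E1 /eqP E2]|_]; last by rewrite scale0r.
have := hC Qq; rewrite E1 E2 => /(_ uv) H.
by rewrite addrC H scale0r.
Qed.

Lemma VA u f : dv u ** ar f + e_ u ** da f = if t f == u then da f else 0.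
Proof.
case: eqVneq => [E1|N].
  rewrite -E1; apply: (Qsum_uniq _ (hB f)).
  apply: Qsum_ext (Qsum_add (Qsum_lin (HmL (ar f)) (hA (t f)))
                            (Qsum_lin (HmR (e_ (t f))) (hB f))).
  by move=> q _ /=; rewrite PW3.
apply: (Qsum_uniq _ Qsum0).
apply: Qsum_ext (Qsum_add (Qsum_lin (HmL (ar f)) (hA u)) (Qsum_lin (HmR (e_ u)) (hB f))).
move=> q Qq /=; rewrite PW4 //.
case: andP => [[/eqP E1 /eqP E2]|_]; last by rewrite scale0r.
have N' : u != t f by rewrite eq_sym.
have := hC Qq; rewrite E1 E2 => /(_ N') H.
by rewrite addrC H scale0r.
Qed.

Lemma B1 a : da a = da a ** e_ (h a) + ar a ** dv (h a).
Proof.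
apply: (Qsum_uniq (hB a)).
apply: Qsum_ext (Qsum_add (Qsum_lin (HmL (e_ (h a))) (hB a)) (Qsum_lin (HmR (ar a)) (hA (h a)))).
by move=> q _ /=; rewrite PW5.
Qed.
End II.

Section I.
Hypothesis I1 : forall v, dv v = dv v ** e_ v + e_ v ** dv v.
Hypothesis I2 : forall u v, u != v -> dv u ** e_ v + e_ u ** dv v = 0.
Hypothesis I3 : forall a, da a = dv (t a) ** ar a + e_ (t a) ** da a.
Hypothesis I4 : forall a, da a = da a ** e_ (h a) + ar a ** dv (h a).

Lemma condA_of v : Qsum Q (dv v) (fa v).
Proof.
have H2 : Qsum Q (dv v) (fun q => ((if phd q == v then crd (dv v) q else 0)
                 + (if ptl q == v then crd (dv v) q else 0)) *: r q).
  rewrite {1}(I1 v).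
  apply: Qsum_ext (Qsum_add (Qsum_lin (HmL (e_ v)) (Hexp (dv v)))
                            (Qsum_lin (HmR (e_ v)) (Hexp (dv v)))).
  by move=> q _ /=; rewrite PW6.
apply: Qsum_ext (Hexp (dv v)) => q Qq.
move: (Qcoef (Hexp (dv v)) H2 Qq); rewrite /fa.
case: (eqVneq (phd q) v) => E1; case: (eqVneq (ptl q) v) => E2;
  rewrite ?E1 ?E2 ?(negbTE E1) ?(negbTE E2) /= ?eqxx /= ?addr0 ?add0r => Hc //.
- have C0 : crd (dv v) q = 0.
    by apply: (@addrI _ (crd (dv v) q)); rewrite addr0 -Hc.
  by rewrite C0 scale0r.
- by rewrite Hc scale0r.
Qed.

Lemma condC_of q : Q q -> ptl q != phd q ->
  crd (dv (phd q)) q + crd (dv (ptl q)) q = 0.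
Proof.
move=> Qq N.
have H : Qsum Q 0 (fun q' => (if (ptl q' == ptl q) && (phd q' == phd q)
     then crd (dv (ptl q)) q' + crd (dv (phd q)) q' else 0) *: r q').
  rewrite -(I2 N).
  apply: Qsum_ext (Qsum_add (Qsum_lin (HmL (e_ (phd q))) (condA_of (ptl q)))
                            (Qsum_lin (HmR (e_ (ptl q))) (condA_of (phd q)))).
  by move=> q' _ /=; rewrite PW2.
have H0 : Qsum Q 0 (fun q' => (0 : k) *: r q').
  by apply: Qsum_ext Qsum0 => q' _; rewrite scale0r.
by have := Qcoef H H0 Qq; rewrite !eqxx /= addrC.
Qed.

Lemma condB_of a : Qsum Q (da a) (fb a).
Proof.
have E1 : da a = dv (t a) ** ar a + (e_ (t a) ** da a) ** e_ (h a) + ar a ** dv (h a).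
  rewrite {1}(I3 a) -addrA; congr (_ + _).
  by rewrite {1}(I4 a) mulAD -!Hass ear.
rewrite {1}E1.
apply: Qsum_ext (Qsum_add (Qsum_add (Qsum_lin (HmL (ar a)) (condA_of (t a)))
   (Qsum_lin (islin_comp (HmR (e_ (t a))) (HmL (e_ (h a)))) (Hexp (da a))))
   (Qsum_lin (HmR (ar a)) (condA_of (h a)))).
by move=> q _ /=; rewrite PW7.
Qed.
End I.

Definition lmul (s : seq E) (z : A) := foldr (fun e acc => ar e ** acc) z s.
Definition rmul (z : A) (s : seq E) := foldl (fun acc e => acc ** ar e) z s.
Definition LF (s : seq E) : A :=
  \sum_(i < size s) lmul (take i s) (rmul (da (tnth (in_tuple s) i)) (drop i.+1 s)).
Definition Dp (p : qp) : A := if arrows p is [::] then dv (ptl p) else LF (arrows p).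

Lemma LF_cons e s : LF (e :: s) = rmul (da e) s + ar e ** LF s.
Proof.
rewrite /LF big_ord_recl; congr (_ + _).
  by rewrite (tnth_nth e) /= drop0.
rewrite [RHS](islin_sum _ _ (HmR (ar e))); apply: eq_bigr => i _.
by rewrite !(tnth_nth e) /= add0n /bump leq0n add1n.
Qed.

Lemma rmul_cons z f s : rmul z (f :: s) = rmul (z ** ar f) s.
Proof. by []. Qed.

Lemma LF_nil : LF [::] = 0.
Proof. by rewrite /LF big_ord0. Qed.

Lemma rmul_path z (p : qp) f s : arrows p = f :: s -> rmul z (f :: s) = z ** r p.
Proof.
elim: s z f p => [|g s IH] z f p e.
  by rewrite (path_one e).
have [p' [H1 H2 ->]] := path_cons e.
by rewrite rmul_cons (IH _ _ _ H2) Hass r_pc.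
Qed.

Lemma Dp_triv v : Dp (triv t h v) = dv v. Proof. by []. Qed.

Lemma Dp_apath f : Dp (apath t h f) = da f.
Proof. by rewrite /Dp /= LF_cons LF_nil mulA0 addr0. Qed.

Lemma Drec (hB1 : forall a, da a = da a ** e_ (h a) + ar a ** dv (h a))
  e (p' : qp) : ptl p' = h e -> Dp (pc (apath t h e) p') = da e ** r p' + ar e ** Dp p'.
Proof.
move=> H.
have ep : phd (apath t h e) = ptl p' by rewrite phd_apath.
rewrite /Dp pc_arrows // arrows_apath /= LF_cons.
case E1: (arrows p') => [|g s].
  by rewrite LF_nil mulA0 addr0 /= (path_nil E1) ptl_triv H -hB1.
by rewrite (rmul_path _ E1).
Qed.


Section Leib.
Hypothesis HV1 : forall u, dv u = dv u ** e_ u + e_ u ** dv u.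
Hypothesis HV2 : forall u v, u != v -> dv u ** e_ v + e_ u ** dv v = 0.
Hypothesis HVA : forall u f, dv u ** ar f + e_ u ** da f = if t f == u then da f else 0.
Hypothesis HB1 : forall a, da a = da a ** e_ (h a) + ar a ** dv (h a).

Lemma coreT u q : (if u == ptl q then Dp (pc (triv t h u) q) else 0)
  = dv u ** r q + e_ u ** Dp q.
Proof.
case Eq: (arrows q) => [|f s'].
  rewrite (path_nil Eq) ptl_triv Dp_triv.
  case: (eqVneq u (ptl q)) => [Eu|N].
    by rewrite -Eu (pc_triv_l (ptl_triv _ _ u)) Dp_triv -HV1.
  by rewrite (HV2 N).
have [q' [Hq' Eq' ->]] := path_cons Eq.
have ep : phd (apath t h f) = ptl q' by rewrite phd_apath Hq'.
rewrite (pc_ptl ep) ptl_apath (Drec HB1 Hq') (r_pc ep).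
rewrite mulAD -!Hass addrA -mulDA HVA vtr ptl_apath.
case: (eqVneq (t f) u) => [Eu|N].
  rewrite -Eu /= (pc_triv_l (q := pc (apath t h f) q')) ?(Drec HB1 Hq') //.
  by rewrite (pc_ptl ep) ptl_apath.
by rewrite /= !mul0A addr0.
Qed.

Lemma coreL p q : (if phd p == ptl q then Dp (pc p q) else 0) = Dp p ** r q + r p ** Dp q.
Proof.
move Hn: (size (arrows p)) => n.
elim: n p Hn => [|n IH] p Hn.
  move/eqP: Hn; rewrite size_eq0 => /eqP Ep.
  by rewrite (path_nil Ep) phd_triv Dp_triv coreT.
case Ep: (arrows p) Hn => [|e s] //= [Hs].
have [p' [Hp' Ep' ->]] := path_cons Ep.
have Hs' : size (arrows p') = n by rewrite Ep'.
have IHq := IH p' Hs'.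
have ep : phd (apath t h e) = ptl p' by rewrite phd_apath Hp'.
rewrite (pc_phd ep) (Drec HB1 Hp') (r_pc ep).
case: (eqVneq (phd p') (ptl q)) => [Eu|N].
  rewrite Eu eqxx in IHq.
  have Hp'q : ptl (pc p' q) = h e by rewrite (pc_ptl Eu) Hp'.
  rewrite (pc_assoc ep Eu) (Drec HB1 Hp'q) IHq (r_pc Eu).
  by rewrite !mulAD !mulDA !Hass addrA.
rewrite (negbTE N) in IHq.
have rr0 : r p' ** r q = 0 by rewrite Hrm (negbTE N).
by rewrite !mulDA !Hass rr0 mulA0 add0r -mulAD -IHq mulA0.
Qed.
End Leib.

End PW.

End Core.

End CoreM.
Import CoreM.


Set Implicit Arguments.
Unset Strict Implicit.
Unset Printing Implicit Defensive.
Import GRing.Theory.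
Local Open Scope ring_scope.

Section MainLemmas.
Variables (V E : finType) (t h : E -> V) (k : fieldType).
Local Notation qp := (qpath t h).
Local Notation kG := (kG t h k).
Variables (A : lmodType k) (pi : kG -> A) (mulA : A -> A -> A) (r : qp -> A).
Hypothesis HmL : forall z, islin (fun w => mulA w z).
Hypothesis HmR : forall z, islin (fun w => mulA z w).

Lemma diff_Lin (Dq : qp -> A) (Hr : forall p, pi << p >> = r p) (pil : islin pi)
  (Hcore : forall p q, (if phd p == ptl q then Dq (pc p q) else 0)
             = mulA (Dq p) (r q) + mulA (r p) (Dq q)) :
  forall x y, Lin Dq (pmul x y) = mulA (Lin Dq x) (pi y) + mulA (pi x) (Lin Dq y).
Proof.
move=> x y.
have PL : forall z, pi z = Lin r z.
  by move=> z; rewrite (lin_Lin pil); apply: eq_Lin => p; rewrite Hr.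
rewrite pmulE (PL x) (PL y).
rewrite (Lin_comp _ _ (Lin_islin Dq)).
rewrite (Lin_comp _ _ (HmL (Lin r y))) (Lin_comp _ _ (HmL (Lin Dq y))).
rewrite -LinF_add; apply: eq_Lin => p.
rewrite (Lin_comp _ _ (Lin_islin Dq)).
rewrite (Lin_comp _ _ (HmR (Dq p))) (Lin_comp _ _ (HmR (r p))).
rewrite -LinF_add; apply: eq_Lin => q.
by rewrite -Hcore pcatE; case: ifP => _; rewrite ?Lin_U ?Lin0.
Qed.

Lemma kVE0 : in_kVE (0 : kG).
Proof. by move=> p; rewrite -mcoeff_neq0 mcoeff0 eqxx. Qed.

Lemma kVE_lin a (x y : kG) : in_kVE x -> in_kVE y -> in_kVE (a *: x + y).
Proof.
move=> Hx Hy p /(fsubsetP (msuppD_le _ _)); rewrite in_fsetU => /orP[|].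
  by move/(fsubsetP (msuppZ_le _ _)); apply: Hx.
exact: Hy.
Qed.

Lemma kVE_U (p : qp) : (size (arrows p) <= 1)%N -> in_kVE (<< p >> : kG).
Proof. by move=> H p'; rewrite msuppU1' inE => /eqP ->. Qed.

Lemma kVE_Lin (D0 : kG -> A) (Dq : qp -> A) (HD0 : linear_on_kVE D0)
  (Hq : forall p, (size (arrows p) <= 1)%N -> Dq p = D0 << p >>) (x : kG) :
  in_kVE x -> Lin Dq x = D0 x.
Proof.
move=> Hx.
have D00 : D0 0 = 0.
  have := HD0 1 0 0 kVE0 kVE0; rewrite !scale1r addr0 => e.
  by apply: (addrI (D0 0)); rewrite addr0 -e.
have gen : forall (s : seq qp) (c : qp -> k),
    (forall p, p \in s -> (size (arrows p) <= 1)%N) ->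
    in_kVE (\sum_(p <- s) << c p *g p >>) /\
    D0 (\sum_(p <- s) << c p *g p >>) = \sum_(p <- s) c p *: Dq p.
  move=> s c; elim: s => [|p s IH] Hs; first by rewrite !big_nil D00; split => //; apply: kVE0.
  have Hp : (size (arrows p) <= 1)%N by apply: Hs; rewrite inE eqxx.
  have [IH1 IH2] : in_kVE (\sum_(p <- s) << c p *g p >>) /\
    D0 (\sum_(p <- s) << c p *g p >>) = \sum_(p <- s) c p *: Dq p.
    by apply: IH => p' p's; apply: Hs; rewrite inE p's orbT.
  rewrite !big_cons monU_scale; split; first exact: kVE_lin (kVE_U Hp) IH1.
  by rewrite HD0 ?IH2 ?(Hq _ Hp) //; apply: kVE_U.
have [_ E1] := gen (msupp x) (fun p => x@_p) (fun p ps => Hx p ps).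
by rewrite {2}(monalgE x) E1.
Qed.

End MainLemmas.

Lemma LF_ext (V E : finType) (t h : E -> V) (k : fieldType) (A : lmodType k)
  (mulA : A -> A -> A) (r : qpath t h -> A) (da da' : E -> A) s :
  (forall e, da e = da' e) -> LF mulA r da s = LF mulA r da' s.
Proof. by move=> H; apply: eq_bigr => i _; rewrite H. Qed.

Unset Implicit Arguments.

Theorem proposition2p5 (k : fieldType) (V E : finType) (t h : E -> V)
    (Hconn : quiver_connected t h)
    (I : kG t h k -> Prop) (HI : two_sided_ideal I)
    (HIR2 : forall x, I x -> in_R2 x)
    (A : lmodType k) (pi : kG t h k -> A) (mulA : A -> A -> A)
    (Hquot : is_quotient I pi mulA)
    (Q : qpath t h -> Prop) (crd : A -> qpath t h -> k)
    (HQ : is_path_basis pi Q crd)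
    (HQV : forall v, Q (triv t h v)) (HQE : forall e, Q (apath t h e)) :
  (forall D : kG t h k -> A, diff_op pi mulA D ->
     [/\ cond_a pi Q crd D, cond_b pi mulA Q crd D & cond_c Q crd D])
  /\
  (forall D0 : kG t h k -> A, linear_on_kVE D0 ->
     cond_a pi Q crd D0 -> cond_b pi mulA Q crd D0 -> cond_c Q crd D0 ->
     exists D : kG t h k -> A,
       [/\ diff_op pi mulA D,
           (forall x, in_kVE x -> D x = D0 x),
           (forall p : qpath t h, (2 <= size (arrows p))%N ->
              D << p >> = leibniz_formula pi mulA D p) &
           (forall D' : kG t h k -> A, diff_op pi mulA D' ->
              (forall x, in_kVE x -> D' x = D0 x) -> forall x, D' x = D x)]).
Proof.
have HmL : forall z, islin (fun w => mulA w z) := mulA_linl Hquot.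
have HmR : forall z, islin (fun w => mulA z w) := mulA_linr Hquot.
have Hrm : forall p q, mulA (res pi p) (res pi q)
    = if phd p == ptl q then res pi (pc p q) else 0 := res_mul Hquot.
have Hass : forall a b c, mulA (mulA a b) c = mulA a (mulA b c) := mulA_assoc Hquot.
case: HQ => Hind Hexp.
have pil := pi_lin Hquot.
split.
  move=> D [Dlin DL].
  have Dl : islin D := Dlin.
  have D0 : D 0 = 0 := islin0 Dl.
  have I1 : forall v, D (vtx t h k v) = mulA (D (vtx t h k v)) (res pi (triv t h v))
      + mulA (res pi (triv t h v)) (D (vtx t h k v)).
    move=> v; have := DL (vtx t h k v) (vtx t h k v).
    rewrite /vtx pmulUU pcatE phd_triv ptl_triv eqxx (pc_triv_l (ptl_triv t h v)).
    by move=> H; exact: H.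
  have I2 : forall u v, u != v -> mulA (D (vtx t h k u)) (res pi (triv t h v))
      + mulA (res pi (triv t h u)) (D (vtx t h k v)) = 0.
    move=> u v uv; have := DL (vtx t h k u) (vtx t h k v).
    rewrite /vtx pmulUU pcatE phd_triv ptl_triv (negbTE uv) D0.
    by move=> H; exact: (esym H).
  have I3 : forall a, D (arr t h k a) = mulA (D (vtx t h k (t a))) (res pi (apath t h a))
      + mulA (res pi (triv t h (t a))) (D (arr t h k a)).
    move=> a; have := DL (vtx t h k (t a)) (arr t h k a).
    rewrite /vtx /arr pmulUU pcatE phd_triv ptl_apath eqxx (pc_triv_l (ptl_apath t h a)).
    by move=> H; exact: H.
  have I4 : forall a, D (arr t h k a) = mulA (D (arr t h k a)) (res pi (triv t h (h a)))
      + mulA (res pi (apath t h a)) (D (vtx t h k (h a))).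
    move=> a; have := DL (arr t h k a) (vtx t h k (h a)).
    rewrite /vtx /arr pmulUU pcatE phd_apath ptl_triv eqxx (pc_triv_r (phd_apath t h a)).
    by move=> H; exact: H.
  split.
  - move=> v; exact: (condA_of (mulA:=mulA) (r:=res pi) (Q:=Q) (crd:=crd)
      (dv:=fun v => D (vtx t h k v)) HmL HmR Hrm Hind Hexp I1 v).
  - move=> a; exact: (condB_of (mulA:=mulA) (r:=res pi) (Q:=Q) (crd:=crd)
      (dv:=fun v => D (vtx t h k v)) (da:=fun e => D (arr t h k e))
      HmL HmR Hrm Hass Hind Hexp I1 I3 I4 a).
  - move=> q Qq N; exact: (condC_of (mulA:=mulA) (r:=res pi) (Q:=Q) (crd:=crd)
      (dv:=fun v => D (vtx t h k v)) HmL HmR Hrm Hind Hexp I1 I2 Qq N).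
move=> D0 HD0 hA hB hC.
pose dv := fun v => D0 (vtx t h k v).
pose da := fun e => D0 (arr t h k e).
have hA' : forall v, Qsum Q (dv v) (fa (res pi) crd dv v) := hA.
have hB' : forall p, Qsum Q (da p) (fb mulA (res pi) crd dv da p) := hB.
have hC' : forall q, Q q -> ptl q != phd q ->
    crd (dv (phd q)) q + crd (dv (ptl q)) q = 0 := hC.
have HV1 := Videm HmL HmR Hrm hA'.
have HV2 := Vorth HmL HmR Hrm hA' hC'.
have HVA := VA HmL HmR Hrm Hass hA' hB' hC'.
have HB1 := B1 HmL HmR Hrm Hass hA' hB'.
pose Dq := Dp mulA (res pi) dv da.
have Hcore := coreL HmL HmR Hrm Hass HV1 HV2 HVA HB1.
have Hdiff : diff_op pi mulA (Lin Dq).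
  split; first exact: Lin_islin.
  exact: (diff_Lin HmL HmR (r := res pi) (fun p => erefl) pil Hcore).
have HDq1 : forall p : qpath t h, (size (arrows p) <= 1)%N -> Dq p = D0 << p >>.
  move=> p; case Ep: (arrows p) => [|f [|g s]] // _.
    by rewrite (path_nil Ep).
  by rewrite (path_one Ep) /Dq (Dp_apath (res pi) HmR dv da).
exists (Lin Dq); split => //.
- move=> x Hx; exact: (kVE_Lin HD0 HDq1 Hx).
- move=> p Hp.
  transitivity (LF mulA (res pi) (fun e => Lin Dq (arr t h k e)) (arrows p)); last first.
    rewrite /leibniz_formula /LF /lmul /rmul /lmulA /rmulA.
    reflexivity.
  transitivity (Dq p); first exact: Lin_U.
  rewrite /Dq /Dp.
  case Ep: (arrows p) Hp => [|e s] // _.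
  apply: LF_ext => f.
  rewrite /arr Lin_U.
  exact: (esym (Dp_apath (res pi) HmR dv da f)).
- move=> D' [D'lin D'L] HD' x.
  have D'l : islin D' := D'lin.
  have Hpath : forall p, D' << p >> = Dq p.
    move=> p; move Hn: (size (arrows p)) => n.
    elim: n p Hn => [|n IH] p Hn.
      move/eqP: Hn; rewrite size_eq0 => /eqP Ep.
      rewrite (path_nil Ep) (HD' _ (kVE_U (p := triv t h (ptl p)) (leq0n 1))).
      by rewrite /Dq Dp_triv.
    case Ep: (arrows p) Hn => [|e s] //= [Hs].
    have [p' [Hp' Ep' ->]] := path_cons Ep.
    have Hs' : size (arrows p') = n by rewrite Ep'.
    have ep : phd (apath t h e) = ptl p' by rewrite phd_apath Hp'.
    have -> : << pc (apath t h e) p' >> = pmul (arr t h k e) << p' >>.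
      by rewrite /arr pmulUU pcatE ep eqxx.
    have E1 := IH p' Hs'.
    have E2 : D' (arr t h k e) = da e := HD' _ (kVE_U (p := apath t h e) (leqnn 1)).
    rewrite D'L /Dq (Drec HmR Hrm Hass HB1 Hp').
    exact: (congr2 (fun a b => a + b) (congr2 mulA E2 (erefl _)) (congr2 mulA (erefl _) E1)).
  rewrite (lin_Lin D'l); apply: eq_Lin => p; exact: Hpath.
Qed.
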